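(* Let $a$ and $b$ be relatively prime integers with $1<a<b$, let $(u,v)$ be the definitely least solution of $ax+by=1$, let $S=\langle a,b\rangle$ and $h=\min I(S)$. Let $L(S)$ be the $|v|\times|u|$ matrix with $(i,j)$-entry $L(S)(i,j)=h+(i-1)b+(j-1)a$. Then for all $1\le i\le |v|$ and $1\le j\le |u|$, $L(S)(i,j)=F(S)-(|u|-j)a-(|v|-i)b$.
   Context: $\langle a,b\rangle=\{\lambda_1a+\lambda_2b:\lambda_1,\lambda_2\in\mathbb{N}\}$. $F(S)$ is the Frobenius number of $S$, the largest integer not in $S$. $I(S)$ is the set of isolated gaps of $S$ ($x\in\mathbb{N}\setminus S$ with $x-1,x+1\in S$). The definitely least solution $(u,v)$ of $ax+by=1$ is the unique integer solution with $|u|,|v|$ minimal; equivalently the one with $|u|\le b/2$, $|v|\le a/2$. *)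

(* Defs.v *)
From mathcomp Require Import all_boot all_order all_algebra.
Set Implicit Arguments. Unset Strict Implicit. Unset Printing Implicit Defensive.
Import Order.TTheory GRing.Theory Num.Theory.
Local Open Scope ring_scope.

Definition in_semigroup2 (a b n : nat) : Prop :=
  exists l1 l2 : nat, n = (l1 * a + l2 * b)%N.

Definition is_frobenius (S : nat -> Prop) (F : int) : Prop :=
  (exists n : nat, F = n%:Z /\ ~ S n) /\
  (forall n : nat, F < n%:Z -> S n).

Definition isolated_gap (S : nat -> Prop) (x : nat) : Prop :=
  (0 < x)%N /\ ~ S x /\ S x.-1 /\ S x.+1.

Definition is_min_isolated_gap (S : nat -> Prop) (h : nat) : Prop :=
  isolated_gap S h /\ (forall x, isolated_gap S x -> (h <= x)%N).

(* (u,v) is the definitely least solution of a x + b y = 1: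
   the integer solution with |u| <= b/2 and |v| <= a/2. *)
Definition definitely_least (a b : nat) (u v : int) : Prop :=
  (a%:Z * u + b%:Z * v = 1) /\ (2 * `|u|%N <= b)%N /\ (2 * `|v|%N <= a)%N.

Definition Lmat (a b h : nat) (i j : nat) : nat :=
  (h + (i - 1) * b + (j - 1) * a)%N.

(* Main.v *)
Require Import Defs.
From mathcomp Require Import all_boot all_order all_algebra.
From mathcomp Require Import zify ring lra.
Import Order.TTheory GRing.Theory Num.Theory.
Local Open Scope ring_scope.

Definition Sz (a b : nat) (n : int) : Prop :=
  exists l1 l2 : nat, n = l1%:Z * a%:Z + l2%:Z * b%:Z.

Lemma SzP a b (n : nat) : in_semigroup2 a b n <-> Sz a b n%:Z.
Proof. split; move=> [l1 [l2 E]]; exists l1, l2; lia. Qed.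

Lemma notS a b (p q n : int) : coprime a b -> (0 < a)%N -> (0 < b)%N ->
  1 <= p -> 1 <= q -> n = a%:Z * b%:Z - p * a%:Z - q * b%:Z -> ~ Sz a b n.
Proof.
move=> cop a0 b0 p1 q1 En [l1 [l2 E]].
have HP : (absz (l1%:Z + p))%:Z = l1%:Z + p by lia.
have HQ : (absz (l2%:Z + q))%:Z = l2%:Z + q by lia.
set P := absz (l1%:Z + p) in HP. set Q := absz (l2%:Z + q) in HQ.
have key : (P * a + Q * b)%N = (a * b)%N.
  apply/eqP; rewrite -eqz_nat PoszD !PoszM HP HQ; apply/eqP.
  have H : l1%:Z * a%:Z + l2%:Z * b%:Z = a%:Z * b%:Z - p * a%:Z - q * b%:Z by rewrite -E.
  lia.
have P1 : (0 < P)%N by lia.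
have Q1 : (0 < Q)%N by lia.
have : (b %| P * a)%N.
  have -> : (P * a = (a - Q) * b)%N by rewrite mulnBl; lia.
  exact: dvdn_mull.
rewrite Gauss_dvdl; last by rewrite coprime_sym.
move=> /(dvdn_leq P1) bP.
have : (b * a <= P * a)%N by rewrite leq_mul2r bP orbT.
have : (b <= Q * b)%N by rewrite leq_pmull.
nia.
Qed.

Lemma repr a b (u v n : int) : (0 < a)%N -> a%:Z * u + b%:Z * v = 1 ->
  exists (q : nat) (m : int), (1 <= q <= a)%N /\ n + q%:Z * b%:Z = m * a%:Z.
Proof.
move=> a0 bez.
have ha : a%:Z != 0 by lia.
have r0 := modz_ge0 (- (n * v)) ha.
have r1 := ltz_pmod (- (n * v)) (ltac:(lia) : 0 < a%:Z).
have dq := divz_eq (- (n * v)) a%:Z.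
set r := ((- (n * v)) %% a%:Z)%Z in r0 r1 dq.
set t := ((- (n * v)) %/ a%:Z)%Z in dq.
have key : n + r * b%:Z = (n * u - t * b%:Z) * a%:Z.
  have -> : r = - (n * v) - t * a%:Z by lia.
  have En : n = n * (a%:Z * u + b%:Z * v) by rewrite bez mulr1.
  rewrite {1}En; ring.
have [rz|rnz] := eqVneq r 0.
- exists a, (n * u - t * b%:Z + b%:Z); split; first by lia.
  move: key; rewrite rz mul0r addr0 => En; rewrite {1}En; ring.
- exists (absz r), (n * u - t * b%:Z); split; first by lia.
  have -> : (absz r)%:Z = r by lia. exact: key.
Qed.

Lemma gapform a b (u v n : int) : coprime a b -> (0 < a)%N -> (0 < b)%N ->
  a%:Z * u + b%:Z * v = 1 -> ~ Sz a b n ->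
  exists p q : int, 1 <= p /\ 1 <= q /\ n = a%:Z * b%:Z - p * a%:Z - q * b%:Z.
Proof.
move=> cop a0 b0 bez nS.
have [q [m [hq E]]] := @repr a b u v n a0 bez.
have En : n = m * a%:Z - q%:Z * b%:Z by rewrite -E addrK.
have [mb|mb] := lerP b%:Z m.
- exfalso; apply: nS; exists (absz (m - b%:Z)), (a - q)%N.
  have -> : (absz (m - b%:Z))%:Z = m - b%:Z by lia.
  have -> : ((a - q)%N)%:Z = a%:Z - q%:Z by lia.
  rewrite En; ring.
- exists (b%:Z - m), q%:Z; split; first by lia. split; first by lia.
  rewrite En; ring.
Qed.
Lemma signs (a b u v : int) : 2 <= a -> 3 <= b -> a * u + b * v = 1 -> (0 < u /\ v < 0) \/ (u < 0 /\ 0 < v).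
Proof. move=> ha hb e.
have [hu|hu] := lerP 1 u; have [hv|hv] := lerP 1 v.
- nia.
- have [hv'|hv'] := lerP 0 v; [nia| left; lia].
- have [hu'|hu'] := lerP 0 u; [nia| right; lia].
- have [hv'|hv'] := lerP 0 v; have [hu'|hu'] := lerP 0 u; try lia; nia.
Qed.

Theorem corollary4p12 (a b : nat) (u v : int) (h : nat) (F : int) :
  coprime a b -> (1 < a)%N -> (a < b)%N ->
  definitely_least a b u v ->
  is_min_isolated_gap (in_semigroup2 a b) h ->
  is_frobenius (in_semigroup2 a b) F ->
  forall i j : nat, (1 <= i <= `|v|)%N -> (1 <= j <= `|u|)%N ->
    (Lmat a b h i j)%:Z
      = F - ((`|u|%N - j)%N * a)%:Z - ((`|v|%N - i)%N * b)%:Z.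
Proof.
move=> cop a1 ab [bez [Hu Hv]] [[h0 [hn [hm hp]]] hmin] [[n0 [Fn0 Fn]] Fall] i j Hi Hj.
have a0 : (0 < a)%N by lia.
have b0 : (0 < b)%N by lia.
have GnS : ~ Sz a b (a%:Z * b%:Z - a%:Z - b%:Z).
  apply: (@notS a b 1 1) => //; ring.
have G1 : 1 <= a%:Z * b%:Z - a%:Z - b%:Z by nia.
have FG : F = a%:Z * b%:Z - a%:Z - b%:Z.
  have nS0 : ~ Sz a b F by rewrite Fn0 -SzP.
  have [p [q [p1 [q1 EF]]]] := @gapform a b u v F cop a0 b0 bez nS0.
  have le1 : F <= a%:Z * b%:Z - a%:Z - b%:Z by nia.
  have [lt2|ge2] := ltrP F (a%:Z * b%:Z - a%:Z - b%:Z); last by lia.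
  exfalso; apply: GnS.
  have -> : a%:Z * b%:Z - a%:Z - b%:Z = (absz (a%:Z * b%:Z - a%:Z - b%:Z)%R)%:Z by lia.
  apply/SzP; apply: Fall; lia.
have sg := @signs a%:Z b%:Z u v ltac:(lia) ltac:(lia) bez.
set U := `|u|%N in Hu Hj *. set V := `|v|%N in Hv Hi *.
have U1 : (1 <= U)%N by rewrite /U; lia.
have V1 : (1 <= V)%N by rewrite /V; lia.
have [e [He HUV]] : exists e : int, (e = 1 \/ e = -1) /\ a%:Z * U%:Z - b%:Z * V%:Z = e.
  case: sg => [[u0 v0]|[u0 v0]].
  - have -> : U%:Z = u by rewrite /U; lia.
    have -> : V%:Z = - v by rewrite /V; lia.
    exists 1; split; [by left | lia].
  - have -> : U%:Z = - u by rewrite /U; lia.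
    have -> : V%:Z = v by rewrite /V; lia.
    exists (-1); split; [by right | lia].
set g := a%:Z * b%:Z - a%:Z * U%:Z - b%:Z * V%:Z.
have E1 : (b%:Z - 2 * U%:Z) * a%:Z = g - e by rewrite /g; lia.
have E2 : (a%:Z - 2 * V%:Z) * b%:Z = g + e by rewrite /g; lia.
have S1 : Sz a b (g - e).
  exists (b - 2 * U)%N, 0%N.
  have -> : ((b - 2 * U)%N)%:Z = b%:Z - 2 * U%:Z by lia.
  rewrite E1; ring.
have S2 : Sz a b (g + e).
  exists 0%N, (a - 2 * V)%N.
  have -> : ((a - 2 * V)%N)%:Z = a%:Z - 2 * V%:Z by lia.
  rewrite E2; ring.
have g1 : 1 <= g.
  have : 0 <= (b%:Z - 2 * U%:Z) * a%:Z by apply: mulr_ge0; lia.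
  have : 0 <= (a%:Z - 2 * V%:Z) * b%:Z by apply: mulr_ge0; lia.
  lia.
have gnS : ~ Sz a b g by apply: (@notS a b U%:Z V%:Z) => //; try lia; rewrite /g; ring.
have Sm1 : forall x : int, Sz a b (x - e) -> Sz a b (x + e) -> Sz a b (x - 1) /\ Sz a b (x + 1).
  move=> x; case: He => ->; first by move=> *; split.
  by rewrite opprK => *; split.
have hle : (h <= absz g)%N.
  apply: hmin; split; first by lia.
  have gE : g = (absz g)%:Z by lia.
  have [Sa Sb] := Sm1 g S1 S2.
  split; first by rewrite SzP -gE.
  split; apply/SzP.
  - by have -> : ((absz g).-1)%:Z = g - 1 by lia.
  - by have -> : ((absz g).+1)%:Z = g + 1 by lia.
have hnS : ~ Sz a b h%:Z by rewrite -SzP.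
have hS1 : Sz a b (h%:Z - 1) by have := proj1 (SzP a b h.-1) hm; have -> : (h.-1)%:Z = h%:Z - 1 by lia.
have hS2 : Sz a b (h%:Z + 1) by have := proj1 (SzP a b h.+1) hp; have -> : (h.+1)%:Z = h%:Z + 1 by lia.
have [p [q [p1 [q1 Eh]]]] := @gapform a b u v h%:Z cop a0 b0 bez hnS.
have pU : p <= U%:Z.
  have [//|pU] := lerP p U%:Z; exfalso.
  have : ~ Sz a b (h%:Z + e).
    apply: (@notS a b (p - U%:Z) (q + V%:Z)) => //; [lia | lia | lia].
  by case: He => ->; rewrite ?opprK.
have qV : q <= V%:Z.
  have [//|qV] := lerP q V%:Z; exfalso.
  have : ~ Sz a b (h%:Z - e).
    apply: (@notS a b (p + U%:Z) (q - V%:Z)) => //; [lia | lia | lia].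
  by case: He => ->; rewrite ?opprK.
have hg : h%:Z = g.
  have : p * a%:Z <= U%:Z * a%:Z by apply: ler_wpM2r; lia.
  have : q * b%:Z <= V%:Z * b%:Z by apply: ler_wpM2r; lia.
  rewrite /g in g1 *; lia.
rewrite /Lmat PoszD PoszD !PoszM -!subzn //; try lia.
Qed.
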